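(* Let $p\in\mathbb{R}[\mathbf{x}]$ be a homogeneous polynomial of degree $d$ in $n$ variables and let $r\in\mathbb{N}$. Define \[ p^{(r)}=\max\Big\{\lambda\in\mathbb{R}:\ \Big(\sum_{i=1}^nx_i\Big)^r\Big(p(\mathbf{x})-\lambda\Big(\sum_{i=1}^nx_i\Big)^d\Big)\ \text{has only nonnegative coefficients}\Big\}, \] and let $\underline{f}_{\mathrm{LP}}^{(r+d)}$ be the optimal value of the linear program \[ \min\ L(p)\quad\text{s.t.}\quad L(1)=1,\quad L(1)\le 1,\quad L(\mathbf{x}^\alpha)\ge 0\ (|\alpha|\le r+d),\quad L(\mathbf{x}^\alpha)=L\Big(\mathbf{x}^\alpha\sum_{i=1}^nx_i\Big)\ (|\alpha|\le r+d-1), \] over linear functionals $L:\mathbb{R}[\mathbf{x}]_{r+d}\to\mathbb{R}$ (this is the LP relaxation of order $r+d$ of $\min_{\mathbf{x}\in\Delta_{n-1}}p(\mathbf{x})=\inf\{\int_{\Delta_{n-1}}p\,\mathrm{d}\mu:\mu\in\mathcal{M}(\Delta_{n-1})_+,\ \int_{\Delta_{n-1}}\mathrm{d}\mu=1\}$). Then $p^{(r)}=\underline{f}_{\mathrm{LP}}^{(r+d)}$.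
   Context: $\Delta_{n-1}=\{\mathbf{x}\in\mathbb{R}^n_+:x_1+\dots+x_n=1\}$; $\mathcal{M}(\Delta_{n-1})_+$ is the cone of positive finite Borel measures on $\Delta_{n-1}$; $\mathbb{R}[\mathbf{x}]_{r+d}$ is the space of real polynomials of degree at most $r+d$; $\mathbf{x}^\alpha=x_1^{\alpha_1}\cdots x_n^{\alpha_n}$, $|\alpha|=\sum_i\alpha_i$. *)

(* Defs.v *)
From HB Require Import structures.
From mathcomp Require Import all_boot all_order all_algebra.
From mathcomp Require Import reals.
From mathcomp Require Import mpoly.
Set Implicit Arguments. Unset Strict Implicit. Unset Printing Implicit Defensive.
Import Order.TTheory GRing.Theory Num.Theory.
Local Open Scope ring_scope.

Definition sumx (R : realType) (n : nat) : {mpoly R[n]} := \sum_(i < n) 'X_i.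

Definition nonneg_coeffs (R : realType) (n : nat) (q : {mpoly R[n]}) : Prop :=
  forall m : 'X_{1..n}, 0 <= q@_m.

Definition polya_set (R : realType) (n : nat) (p : {mpoly R[n]}) (d r : nat)
    (lam : R) : Prop :=
  nonneg_coeffs (sumx R n ^+ r * (p - lam *: sumx R n ^+ d)).

Definition lp_feasible (R : realType) (n : nat) (k : nat)
    (L : {mpoly R[n]} -> R) : Prop :=
  (forall (a : R) (q1 q2 : {mpoly R[n]}), L (a *: q1 + q2) = a * L q1 + L q2) /\
  L 1 = 1 /\ L 1 <= 1 /\
  (forall a : 'X_{1..n}, (mdeg a <= k)%N -> 0 <= L 'X_[a]) /\
  (forall a : 'X_{1..n}, (mdeg a < k)%N -> L 'X_[a] = L ('X_[a] * sumx R n)).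

Definition lp_values (R : realType) (n : nat) (p : {mpoly R[n]}) (k : nat)
    (v : R) : Prop :=
  exists L : {mpoly R[n]} -> R, @lp_feasible R n k L /\ v = L p.

Definition is_max (R : realType) (S : R -> Prop) (v : R) : Prop :=
  S v /\ forall y, S y -> y <= v.

Definition is_min (R : realType) (S : R -> Prop) (v : R) : Prop :=
  S v /\ forall y, S y -> v <= y.

(* Main.v *)
Require Import Defs.
From HB Require Import structures.
From mathcomp Require Import all_boot all_order all_algebra.
From mathcomp Require Import reals.
From mathcomp Require Import mpoly.
Set Implicit Arguments. Unset Strict Implicit. Unset Printing Implicit Defensive.
Import Order.TTheory GRing.Theory Num.Theory.
Local Open Scope ring_scope.

Section S.
Variables (R : realType) (n : nat).
Implicit Types (p q : {mpoly R[n]}).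
Local Notation s := (sumx R n).

Definition nn q := forall m, 0 <= q@_m.

Lemma nnM p q : nn p -> nn q -> nn (p * q).
Proof.
move=> hp hq m; rewrite mcoeffM; apply: sumr_ge0 => k _; exact: mulr_ge0.
Qed.

Lemma nnX m : nn 'X_[m].
Proof. by move=> k; rewrite mcoeffX ler0n. Qed.

Lemma nns : nn s.
Proof.
move=> m; rewrite /sumx raddf_sum; apply: sumr_ge0 => i _; exact: nnX.
Qed.

Lemma nnexp q k : nn q -> nn (q ^+ k).
Proof.
move=> hq; elim: k => [|k ih]; first by move=> m; rewrite expr0 mcoeff1 ler0n.
by rewrite exprS; apply: nnM.
Qed.

Lemma s_homog : s \is 1.-homog.
Proof.
rewrite /sumx; apply: rpred_sum => i _; rewrite dhomogX; by rewrite /= mdeg1.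
Qed.

Lemma sk_homog k : s ^+ k \is k.-homog.
Proof. by have := dhomogMn k s_homog; rewrite mul1n. Qed.

Lemma pos_sk k m : mdeg m = k -> 0 < (s ^+ k)@_m.
Proof.
elim: k m => [|k ih] m hm.
  move/eqP: hm; rewrite mdeg_eq0 => /eqP ->; by rewrite expr0 mcoeff1 eqxx ltr01.
have [/existsP [i hi]|] := boolP [exists i, (0 < m i)%N]; last first.
  rewrite negb_exists => /forallP hall; move: hm; rewrite mdegE big1 // => j _.
  by move: (hall j); rewrite lt0n negbK => /eqP.
have le : (U_(i) <= m)%MM.
  apply/mnm_lepP => j; rewrite mnm1E; case: eqP => [<-|] //.
have hm' : mdeg (m - U_(i))%MM = k.
  have := mdegD (m - U_(i))%MM U_(i); rewrite submK // hm mdeg1 addn1; by case.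
rewrite exprSr /sumx mulr_sumr raddf_sum (bigD1 i) //=.
rewrite -{1}(submK le) addmC mcoeffMX.
apply: (lt_le_trans (ih _ hm')); rewrite lerDl; apply: sumr_ge0 => j _.
apply: nnM; [exact: nnexp nns | exact: nnX].
Qed.

Definition lin (L : {mpoly R[n]} -> R) :=
  forall (a : R) (q1 q2 : {mpoly R[n]}), L (a *: q1 + q2) = a * L q1 + L q2.

Lemma lin0 L : lin L -> L 0 = 0.
Proof.
move=> hL; have := hL 1 0 0; rewrite scaler0 addr0 mul1r => h.
by apply: (addrI (L 0)); rewrite addr0 -h.
Qed.

Lemma linZ L : lin L -> forall a q, L (a *: q) = a * L q.
Proof. by move=> hL a q; rewrite -[a *: q]addr0 hL lin0 // addr0. Qed.

Lemma linD L : lin L -> forall q1 q2, L (q1 + q2) = L q1 + L q2.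
Proof. by move=> hL q1 q2; have := hL 1 q1 q2; rewrite scale1r mul1r. Qed.

Lemma linB L : lin L -> forall q1 q2, L (q1 - q2) = L q1 - L q2.
Proof.
move=> hL q1 q2; rewrite linD // -scaleN1r linZ //; by rewrite mulN1r.
Qed.

Lemma lin_sum L (I : Type) (r : seq I) (F : I -> {mpoly R[n]}) :
  lin L -> L (\sum_(i <- r) F i) = \sum_(i <- r) L (F i).
Proof.
move=> hL; elim: r => [|x r ih]; first by rewrite !big_nil lin0.
by rewrite !big_cons linD // ih.
Qed.

Lemma lin_expand L q : lin L -> L q = \sum_(m <- msupp q) q@_m * L 'X_[m].
Proof.
move=> hL; rewrite {1}(mpolyE q) lin_sum //; apply: eq_bigr => m _; exact: linZ.
Qed.

Lemma shift1 k L q j : lin L ->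
  (forall a : 'X_{1..n}, (mdeg a < k)%N -> L 'X_[a] = L ('X_[a] * s)) ->
  q \is j.-homog -> (j < k)%N -> L q = L (q * s).
Proof.
move=> hL hs hq hj.
have -> : q * s = \sum_(m <- msupp q) q@_m *: ('X_[m] * s).
  rewrite {1}(mpolyE q) mulr_suml; apply: eq_bigr => m _; by rewrite scalerAl.
rewrite lin_expand // lin_sum //; apply: eq_big_seq => m hm.
rewrite linZ // hs //; by rewrite (dhomog_mf hq hm).
Qed.

Lemma shiftn k L q j i : lin L ->
  (forall a : 'X_{1..n}, (mdeg a < k)%N -> L 'X_[a] = L ('X_[a] * s)) ->
  q \is j.-homog -> (j + i <= k)%N -> L q = L (q * s ^+ i).
Proof.
move=> hL hs hq; elim: i => [|i ih] hji; first by rewrite expr0 mulr1.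
rewrite ih ?(leq_trans _ hji) ?leq_add2l //.
rewrite (shift1 hL hs (dhomogM hq (sk_homog i))) ?addnS //.
rewrite exprSr mulrA //. rewrite addnS in hji. exact hji.
Qed.


Section Star.
Variables (k : nat) (al : 'X_{1..n}).
Let e := (s ^+ k)@_al.
Definition w (m : 'X_{1..n}) := ('X_[m] * s ^+ (k - mdeg m))@_al / e.
Definition Lstar (q : {mpoly R[n]}) := \sum_(b : 'X_{1..n < k.+1}) q@_b * w b.

Lemma Lstar_lin : lin Lstar.
Proof.
move=> a q1 q2; rewrite /Lstar. rewrite mulr_sumr -big_split /=; apply: eq_bigr => b _.
rewrite linearD /= mcoeffZ mulrDl. rewrite -mulrA. reflexivity.
Qed.

Lemma LstarX a : (mdeg a <= k)%N -> Lstar 'X_[a] = w a.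
Proof.
move=> ha; rewrite /Lstar (bigD1 (BMultinom (ha : (mdeg a < k.+1)%N))) //=.
rewrite mcoeffX eqxx mul1r big1 ?addr0 // => b hb.
rewrite mcoeffX; case: eqP => [hab|]; last by rewrite mul0r.
by move: hb; rewrite -val_eqE /= hab eqxx.
Qed.

Lemma LstarH q j : q \is j.-homog -> (j <= k)%N ->
  Lstar q = (q * s ^+ (k - j))@_al / e.
Proof.
move=> hq hj; rewrite (lin_expand _ Lstar_lin).
have -> : q * s ^+ (k - j) = \sum_(m <- msupp q) q@_m *: ('X_[m] * s ^+ (k - j)).
  rewrite {1}(mpolyE q) mulr_suml; apply: eq_bigr => m _; by rewrite scalerAl.
rewrite raddf_sum mulr_suml; apply: eq_big_seq => m hm.
rewrite LstarX; last by rewrite (dhomog_mf hq hm).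
rewrite /w (dhomog_mf hq hm) /= mcoeffZ mulrA. reflexivity.
Qed.

End Star.

Lemma lower k L p d r lam : lp_feasible k L -> k = (r + d)%N ->
  p \is d.-homog -> polya_set p d r lam -> lam <= L p.
Proof.
move=> [hL [h1 [_ [hpos hs]]]] hk hp hlam.
set Q := s ^+ r * (p - lam *: s ^+ d).
have hQ : Q \is k.-homog.
  rewrite /Q hk; apply: dhomogM; first by apply: sk_homog.
  by apply: rpredB => //; apply: rpredZ; apply: sk_homog.
have LQ : 0 <= L Q.
  rewrite (lin_expand _ hL) big_seq; apply: sumr_ge0 => m hm; apply: mulr_ge0.
    exact: hlam.
  by apply: hpos; rewrite (dhomog_mf hQ hm).
have e1 : L p = L (p * s ^+ r) by apply: (shiftn hL hs hp); rewrite hk addnC.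
have e2 : L 1 = L (1 * s ^+ k) by apply: (shiftn hL hs (@dhomog1 _ _ _)).
move: LQ; rewrite /Q mulrBr -scalerAr -exprD linB // linZ // -hk.
rewrite mul1r in e2; rewrite -e2 h1 mulr1 mulrC -e1 subr_ge0 //.
Qed.


Lemma seqmin (T : eqType) (f : T -> R) (l : seq T) x0 : x0 \in l ->
  exists2 x, x \in l & forall y, y \in l -> f x <= f y.
Proof.
elim: l x0 => [//|x l ih] x0 _.
have [/ih [x' hx' hmin]|hnil] := boolP (x \in l).
  have [le|lt] := leP (f x) (f x').
    exists x; first by rewrite inE eqxx.
    move=> y; rewrite inE => /orP [/eqP ->|/hmin]; first exact: lexx.
    exact: le_trans.
  exists x'; first by rewrite inE hx' orbT.
  move=> y; rewrite inE => /orP [/eqP ->|/hmin //]; exact: ltW.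
case: l ih hnil => [|z l] ih hnil.
  by exists x; rewrite ?inE // => y; rewrite inE => /eqP ->.
have [x' hx' hmin] := ih z (mem_head _ _).
have [le|lt] := leP (f x) (f x').
  exists x; first by rewrite inE eqxx.
  move=> y; rewrite inE => /orP [/eqP ->|/hmin]; first exact: lexx.
  exact: le_trans.
exists x'; first by rewrite inE hx' orbT.
move=> y; rewrite inE => /orP [/eqP ->|/hmin //]; exact: ltW.
Qed.

Lemma Lstar_feas k al : 0 < (s ^+ k)@_al -> lp_feasible k (Lstar k al).
Proof.
move=> epos; have ene : (s ^+ k)@_al != 0 by rewrite gt_eqF.
have L1 : Lstar k al 1 = 1.
  rewrite -mpolyX0 LstarX ?mdeg0 // /w mdeg0 subn0 mpolyX0 mul1r. exact: divff ene.
split; first exact: Lstar_lin.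
split; first exact: L1.
split; first by rewrite L1.
split.
  move=> a ha; rewrite LstarX // /w; apply: divr_ge0; last exact: ltW.
  apply: nnM; [exact: nnX | exact: nnexp nns].
move=> a ha; rewrite LstarX; last exact: ltnW.
have hh : 'X_[a] * s \is (mdeg a + 1).-homog.
  apply: dhomogM; [by rewrite dhomogX | exact: s_homog].
rewrite (LstarH _ hh); last by rewrite addn1.
rewrite /w.
have -> : (k - mdeg a = (k - (mdeg a).+1).+1)%N.
  by rewrite subnS prednK // subn_gt0.
rewrite exprS mulrA addn1. reflexivity.
Qed.

End S.

Theorem theorem11 (R : realType) (n : nat) (hn : (0 < n)%N)
    (d : nat) (p : {mpoly R[n]}) (hp : p \is d.-homog) (r : nat) :
  exists v : R,
    is_max (polya_set p d r) v /\ is_min (lp_values p (r + d)) v.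
Proof.
set k := (r + d)%N.
set s := sumx R n.
have [m0 hm0] : exists m0 : 'X_{1..n}, mdeg m0 = k.
  case: n hn s p hp => [//|n'] _ s p hp.
  exists (U_(@ord0 n') *+ k)%MM; by rewrite mdegMn mdeg1 mul1n.
have m0in : m0 \in msupp (s ^+ k) by rewrite mcoeff_msupp gt_eqF // pos_sk.
have [al alin hmin] := seqmin (fun m => (s ^+ r * p)@_m / (s ^+ k)@_m) m0in.
have epos : 0 < (s ^+ k)@_al.
  by rewrite lt_def -mcoeff_msupp alin; apply: nnexp; exact: nns.
have hfe := Lstar_feas epos.
have hv : Lstar k al p = (s ^+ r * p)@_al / (s ^+ k)@_al.
  rewrite (LstarH _ hp); last exact: leq_addl.
  have -> : (k - d = r)%N by apply: addnK.
  rewrite -/s (mulrC p). reflexivity.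
have hpol : polya_set p d r (Lstar k al p).
  move=> m; rewrite mulrBr -scalerAr -exprD mcoeffB mcoeffZ -/k.
  have [hmk|hmk] := eqVneq (mdeg m) k.
    have empos := pos_sk R hmk.
    rewrite subr_ge0 -ler_pdivlMr // hv; apply: hmin.
    by rewrite mcoeff_msupp gt_eqF.
  have h1 : s ^+ r * p \is k.-homog.
    by have := dhomogM (sk_homog R n r) hp.
  rewrite (dhomog_nemf_coeff h1 hmk) (dhomog_nemf_coeff (sk_homog R n k) hmk).
  by rewrite mulr0 subr0.
exists (Lstar k al p); split.
  split; first exact: hpol.
  move=> y hy; exact: (lower hfe erefl hp hy).
split; first by exists (Lstar k al); split.
move=> y [L [hL ->]]; exact: (lower hL erefl hp hpol).
Qed.
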